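(* Let $\mathcal R=(R,\delta_R)$ be a differential $k$-ring such that the only $k$-algebra automorphism of $R$ commuting with $\delta_R$ is the identity. Let $\mathcal A_1,\mathcal A_2$ be $\mathcal R$-conformal superalgebras such that the canonical maps $R\to\mathrm{Ctd}_k(\mathcal A_i)$, $r\mapsto r_{\mathcal A_i}$, are $k$-algebra isomorphisms for $i=1,2$. Then $\mathcal A_1$ and $\mathcal A_2$ are isomorphic as $k$-conformal superalgebras (by restriction of scalars) if and only if they are isomorphic as $\mathcal R$-conformal superalgebras.
   Context: Let $k$ be a field of characteristic $0$. A differential $k$-ring is $(R,\delta_R)$ with $R$ a commutative unital $k$-algebra and $\delta_R$ a $k$-linear derivation. An $\mathcal R$-conformal superalgebra is a $\mathbb Z/2\mathbb Z$-graded $R$-module $\mathcal A$ with parity-preserving $k$-linear $\partial_{\mathcal A}$ and $k$-bilinear products $a_{(n)}b$ ($n\in\mathbb Z_+$) satisfying: $a_{(n)}b=0$ for $n\gg0$; $(\partial_{\mathcal A}a)_{(n)}b=-na_{(n-1)}b$, $a_{(n)}\partial_{\mathcal A}b=\partial_{\mathcal A}(a_{(n)}b)+na_{(n-1)}b$; $\partial_{\mathcal A}(ra)=r\partial_{\mathcal A}a+\delta_R(r)a$; $a_{(n)}(rb)=r(a_{(n)}b)$, $(ra)_{(n)}b=\sum_j\frac1{j!}\delta_R^j(r)(a_{(n+j)}b)$. Homomorphisms: even $R$-linear maps preserving $n$-products and commuting with $\partial$. A $k$-conformal superalgebra is one over $(k,0)$, and $\mathcal R$-conformal superalgebras are $k$-conformal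 by restriction. $\mathrm{Ctd}_k(\mathcal A)$ is the set of even $k$-linear endomorphisms $\chi$ of $\mathcal A$ with $\chi(a_{(n)}b)=a_{(n)}\chi(b)$ for all $a,b\in\mathcal A$, $n\ge0$; $r_{\mathcal A}$ denotes $a\mapsto ra$. *)

(* Defs.v *)
From HB Require Import structures.
From mathcomp Require Import all_boot all_order all_algebra.
Set Implicit Arguments. Unset Strict Implicit. Unset Printing Implicit Defensive.
Import GRing.Theory.
Local Open Scope ring_scope.

Definition is_diff_ring (k : fieldType) (R : comAlgType k) (delta : R -> R) : Prop :=
  (forall (c : k) (x y : R), delta (c *: x + y) = c *: delta x + delta y) /\
  (forall x y : R, delta (x * y) = x * delta y + delta x * y).

Definition rigid (k : fieldType) (R : comAlgType k) (delta : R -> R) : Prop :=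
  forall sigma : R -> R,
    (forall (c : k) (x y : R), sigma (c *: x + y) = c *: sigma x + sigma y) ->
    (forall x y : R, sigma (x * y) = sigma x * sigma y) ->
    sigma 1 = 1 ->
    bijective sigma ->
    (forall x, sigma (delta x) = delta (sigma x)) ->
    forall x, sigma x = x.

Record conf_data (k : fieldType) (R : comAlgType k) (A : lmodType R) := ConfData {
  ev : A -> Prop;
  od : A -> Prop;
  cder : A -> A;
  cprod : nat -> A -> A -> A }.

Definition is_graded (k : fieldType) (R : comAlgType k) (A : lmodType R)
  (e o : A -> Prop) : Prop :=
  [/\ e 0 /\ (forall (r : R) (x y : A), e x -> e y -> e (r *: x + y)),
      o 0 /\ (forall (r : R) (x y : A), o x -> o y -> o (r *: x + y)),
      (forall a : A, exists a0 a1, [/\ e a0, o a1 & a = a0 + a1]) &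
      (forall a : A, e a -> o a -> a = 0)].

(* The k-action on A obtained by restriction of scalars is c.a = (c%:A) *: a. *)

Record is_conformal (k : fieldType) (R : comAlgType k) (delta : R -> R)
  (A : lmodType R) (S : conf_data A) : Prop := IsConformal {
  conf_graded : is_graded (ev S) (od S);
  conf_der_ev : forall a, ev S a -> ev S (cder S a);
  conf_der_od : forall a, od S a -> od S (cder S a);
  conf_der_klin : forall (c : k) (a b : A),
      cder S (c%:A *: a + b) = c%:A *: cder S a + cder S b;
  conf_prod_klin_l : forall n (c : k) (a a' b : A),
      cprod S n (c%:A *: a + a') b = c%:A *: cprod S n a b + cprod S n a' b;
  conf_prod_klin_r : forall n (c : k) (a b b' : A),
      cprod S n a (c%:A *: b + b') = c%:A *: cprod S n a b + cprod S n a b';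
  conf_local : forall a b : A, exists N, forall n, (N <= n)%N -> cprod S n a b = 0;
  (* (da)_(n) b = - n a_(n-1) b  (for n = 0 the right side is 0) *)
  conf_der_l : forall n (a b : A),
      cprod S n (cder S a) b = - (cprod S n.-1 a b *+ n);
  conf_der_r : forall n (a b : A),
      cprod S n a (cder S b) = cder S (cprod S n a b) + cprod S n.-1 a b *+ n;
  conf_der_leibniz : forall (r : R) (a : A),
      cder S (r *: a) = r *: cder S a + delta r *: a;
  conf_prod_Rlin_r : forall n (r : R) (a b : A),
      cprod S n a (r *: b) = r *: cprod S n a b;
  (* (ra)_(n) b = sum_j 1/j! delta^j(r) (a_(n+j) b); the sum is finite by locality,
     and any N beyond which the products a_(n+j) b vanish may be used as bound. *)
  conf_prod_Rlin_l : forall n (r : R) (a b : A) (N : nat),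
      (forall j, (N <= j)%N -> cprod S (n + j) a b = 0) ->
      cprod S n (r *: a) b =
        \sum_(j < N) (((j`!)%:R : k)^-1%:A * iter j delta r) *: cprod S (n + j) a b }.

Definition even_map (k : fieldType) (R : comAlgType k) (A1 A2 : lmodType R)
  (S1 : conf_data A1) (S2 : conf_data A2) (f : A1 -> A2) : Prop :=
  forall a, (ev S1 a -> ev S2 (f a)) /\ (od S1 a -> od S2 (f a)).

Definition is_k_hom (k : fieldType) (R : comAlgType k) (A1 A2 : lmodType R)
  (S1 : conf_data A1) (S2 : conf_data A2) (f : A1 -> A2) : Prop :=
  [/\ even_map S1 S2 f,
      (forall (c : k) (a b : A1), f (c%:A *: a + b) = c%:A *: f a + f b),
      (forall n (a b : A1), f (cprod S1 n a b) = cprod S2 n (f a) (f b)) &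
      (forall a, f (cder S1 a) = cder S2 (f a))].

Definition is_R_hom (k : fieldType) (R : comAlgType k) (A1 A2 : lmodType R)
  (S1 : conf_data A1) (S2 : conf_data A2) (f : A1 -> A2) : Prop :=
  [/\ even_map S1 S2 f,
      (forall (r : R) (a b : A1), f (r *: a + b) = r *: f a + f b),
      (forall n (a b : A1), f (cprod S1 n a b) = cprod S2 n (f a) (f b)) &
      (forall a, f (cder S1 a) = cder S2 (f a))].

Definition k_isomorphic (k : fieldType) (R : comAlgType k) (A1 A2 : lmodType R)
  (S1 : conf_data A1) (S2 : conf_data A2) : Prop :=
  exists (f : A1 -> A2) (g : A2 -> A1),
    [/\ is_k_hom S1 S2 f, is_k_hom S2 S1 g, cancel f g & cancel g f].

Definition R_isomorphic (k : fieldType) (R : comAlgType k) (A1 A2 : lmodType R)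
  (S1 : conf_data A1) (S2 : conf_data A2) : Prop :=
  exists (f : A1 -> A2) (g : A2 -> A1),
    [/\ is_R_hom S1 S2 f, is_R_hom S2 S1 g, cancel f g & cancel g f].

Definition in_Ctd (k : fieldType) (R : comAlgType k) (A : lmodType R)
  (S : conf_data A) (chi : A -> A) : Prop :=
  [/\ even_map S S chi,
      (forall (c : k) (a b : A), chi (c%:A *: a + b) = c%:A *: chi a + chi b) &
      (forall n (a b : A), chi (cprod S n a b) = cprod S n a (chi b))].

(* The canonical map R -> Ctd_k(A), r |-> r_A, is well defined and bijective
   (it is automatically a k-algebra homomorphism). *)
Definition canon_Ctd_iso (k : fieldType) (R : comAlgType k) (A : lmodType R)
  (S : conf_data A) : Prop :=
  [/\ (forall r : R, in_Ctd S (fun a => r *: a)),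
      (forall r s : R, (forall a : A, r *: a = s *: a) -> r = s) &
      (forall chi, in_Ctd S chi -> exists r : R, forall a, chi a = r *: a)].

(* Main.v *)
Require Import Defs.
From HB Require Import structures.
From mathcomp Require Import all_boot all_order all_algebra.
From Stdlib Require Import ClassicalEpsilon.
Set Implicit Arguments. Unset Strict Implicit.
Import GRing.Theory.
Local Open Scope ring_scope.

Lemma khom_add (k : fieldType) (R : comAlgType k) (A1 A2 : lmodType R)
  (S1 : conf_data A1) (S2 : conf_data A2) (f : A1 -> A2) :
  is_k_hom S1 S2 f -> forall a b, f (a + b) = f a + f b.
Proof.
case=> _ hl _ _ a b. have := hl 1 a b. by rewrite !scale1r.
Qed.

Lemma choose_fun (R : Type) (P : R -> R -> Prop) :
  (forall r, exists s, P r s) -> exists sigma : R -> R, forall r, P r (sigma r).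
Proof.
move=> h. exists (fun r => proj1_sig (constructive_indefinite_description _ (h r))).
move=> r; exact: proj2_sig.
Qed.

Lemma key (k : fieldType) (R : comAlgType k) (delta : R -> R)
  (Hrigid : rigid delta)
  (A1 A2 : lmodType R) (S1 : conf_data A1) (S2 : conf_data A2)
  (H1 : is_conformal delta S1) (H2 : is_conformal delta S2)
  (C1 : canon_Ctd_iso S1) (C2 : canon_Ctd_iso S2)
  (f : A1 -> A2) (g : A2 -> A1) :
  is_k_hom S1 S2 f -> is_k_hom S2 S1 g -> cancel f g -> cancel g f ->
  forall r x, f (r *: x) = r *: f x.
Proof.
move=> hf hg fg gf.
have fadd := khom_add hf. have gadd := khom_add hg.
have [C1c C1i C1s] := C1. have [C2c C2i C2s] := C2.
have [fev fl fp fd] := hf. have [gev gl gp gd] := hg.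
have hex : forall r, exists s, forall a, f (r *: g a) = s *: a.
  move=> r; apply: C2s; split.
  - move=> a; have [e1 o1] := gev a.
    have [ce _ _] := C1c r. have [e2 o2] := ce (g a).
    have [e3 o3] := fev (r *: g a). by split=> /[dup] h; [move/e1/e2/e3|move/o1/o2/o3].
  - move=> c a b. have [_ cl _] := C1c r. by rewrite gl cl fl.
  - move=> n a b. have [_ _ cp] := C1c r. by rewrite gp cp fp gf.
have [sigma hs] := choose_fun hex.
have hey : forall r, exists s, forall b, g (r *: f b) = s *: b.
  move=> r; apply: C1s; split.
  - move=> a; have [e1 o1] := fev a.
    have [ce _ _] := C2c r. have [e2 o2] := ce (f a).
    have [e3 o3] := gev (r *: f a). by split=> /[dup] h; [move/e1/e2/e3|move/o1/o2/o3].
  - move=> c a b. have [_ cl _] := C2c r. by rewrite fl cl gl.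
  - move=> n a b. have [_ _ cp] := C2c r. by rewrite fp cp gp fg.
have [tau ht] := choose_fun hey.
have sid : forall x, sigma x = x.
  apply: Hrigid.
  - move=> c x y; apply: C2i => a.
    rewrite -hs scalerDl -mulr_algl -scalerA fl !hs.
    by rewrite scalerDl scalerA mulr_algl.
  - move=> x y; apply: C2i => a.
    by rewrite -!scalerA -!hs fg scalerA.
  - by apply: C2i => a; rewrite -hs !scale1r gf.
  - exists tau.
    + move=> r; apply: C1i => b.
      by rewrite -ht -hs !fg.
    + move=> r; apply: C2i => a.
      by rewrite -hs -ht !gf.
  - move=> x; apply: C2i => a.
    have := conf_der_leibniz H1 x (g a).
    move/(congr1 f); rewrite fd hs (conf_der_leibniz H2) fadd -gd hs.
    move=> h; rewrite -hs; symmetry; exact: (addrI _ h).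
move=> r x. by rewrite -[x in LHS]fg hs sid.
Qed.

Theorem mainTheorem7 (k : fieldType) (Hchar : [pchar k] =i pred0)
  (R : comAlgType k) (delta : R -> R)
  (Hdiff : is_diff_ring delta) (Hrigid : rigid delta)
  (A1 A2 : lmodType R) (S1 : conf_data A1) (S2 : conf_data A2)
  (H1 : is_conformal delta S1) (H2 : is_conformal delta S2)
  (C1 : canon_Ctd_iso S1) (C2 : canon_Ctd_iso S2) :
  k_isomorphic S1 S2 <-> R_isomorphic S1 S2.
Proof.
split.
- case=> f [g [hf hg fg gf]]; exists f, g; split=> //.
  + have hR := key Hrigid H1 H2 C1 C2 hf hg fg gf.
    have [a _ c d] := hf; split=> // r x y.
    by rewrite (khom_add hf) hR.
  + have hR := key Hrigid H2 H1 C2 C1 hg hf gf fg.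
    have [a _ c d] := hg; split=> // r x y.
    by rewrite (khom_add hg) hR.
- case=> f [g [hf hg fg gf]]; exists f, g; split=> //.
  + by have [a b c d] := hf; split.
  + by have [a b c d] := hg; split.
Qed.
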